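(* Let $\mathcal{E}$ be a left $\tilde{\mathcal{A}}_{conv.}$-module such that (1) $B(\mathcal{E})\subset\tilde A(\mathcal{E})$ and (2) there exists $N\in\mathbb{N}$ with $a^N\tilde A(\mathcal{E})=0$. Then $B(\mathcal{E})=\tilde A(\mathcal{E})\subset\ker b^{2N}$.
   Context: $\tilde{\mathcal{A}}_{conv.}$ is the algebra of formal series $\sum\gamma_{p,q}a^pb^q$ in variables $a,b$ with $ab-ba=b^2$ such that $|\gamma_{p,q}|\le C_RR^{p+q}q!$ for some $R>1$, $C_R>0$; $B=\mathbb{C}\{\{b\}\}$ is its subalgebra of series $\sum c_qb^q$ with $|c_q|\le CR^qq!$. For a left $\tilde{\mathcal{A}}_{conv.}$-module $\mathcal{E}$: $B(\mathcal{E}):=\{x\in\mathcal{E}:\exists N,\ b^Nx=0\}$ is its $b$-torsion, $A(\mathcal{E})$ its $a$-torsion $\{x:\exists N,\ a^Nx=0\}$, and $\tilde A(\mathcal{E}):=\{x\in\mathcal{E}: Bx\subset A(\mathcal{E})\}$. *)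

(* Defs.v *)
From HB Require Import structures.
From mathcomp Require Import all_boot all_order all_algebra.
From mathcomp Require Import reals.
From mathcomp Require Import complex.
Set Implicit Arguments. Unset Strict Implicit. Unset Printing Implicit Defensive.
Import Order.TTheory GRing.Theory Num.Theory.
Local Open Scope ring_scope.

Section Atilde.
Variable R : realType.
Local Notation C := (R[i]).

(* A formal series  sum_{p,q} s p q * a^p b^q  (normally ordered: a's left). *)
Definition ser := nat -> nat -> C.

Definition conv (s : ser) : Prop :=
  exists (Rr CR : R), 1 < Rr /\ 0 < CR /\
    forall p q : nat, `|s p q| <= (CR * Rr ^+ (p + q) * (q`!)%:R)%:C%C.

Definition inB (s : ser) : Prop :=
  (exists (Rr CR : R), 0 < CR /\
     forall q : nat, `|s 0%N q| <= (CR * Rr ^+ q * (q`!)%:R)%:C%C)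
  /\ forall p q : nat, (0 < p)%N -> s p q = 0.

Definition ser_add (s t : ser) : ser := fun p q => s p q + t p q.
Definition ser_mono (m n : nat) : ser :=
  fun p q => if (p == m) && (q == n) then 1 else 0.
Definition ser_one : ser := ser_mono 0 0.
Definition ser_a : ser := ser_mono 1 0.
Definition ser_b : ser := ser_mono 0 1.

(* Normal ordering from ab - ba = b^2:
   b^q a^r = sum_{k=0}^{r} (-1)^k C(r,k) q(q+1)...(q+k-1) a^{r-k} b^{q+k}. *)
Definition nocoef (q r k : nat) : C :=
  (-1) ^+ k * ('C(r, k))%:R * (\prod_(i < k) (q + i))%:R.

Definition ser_mul (s t : ser) : ser := fun m n =>
  \sum_(p < m.+1) \sum_(q < n.+1) \sum_(k < (n - q).+1)
     s p q * t (m - p + k)%N (n - q - k)%N * nocoef q (m - p + k) k.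

Definition is_Amodule (E : zmodType) (act : ser -> E -> E) : Prop :=
  [/\ forall s t v, conv s -> conv t -> act (ser_add s t) v = act s v + act t v,
      forall s v w, conv s -> act s (v + w) = act s v + act s w,
      forall v, act ser_one v = v
    & forall s t v, conv s -> conv t -> act (ser_mul s t) v = act s (act t v)].

Definition Btors (E : zmodType) (act : ser -> E -> E) (v : E) : Prop :=
  exists N : nat, iter N (act ser_b) v = 0.
Definition Ators (E : zmodType) (act : ser -> E -> E) (v : E) : Prop :=
  exists N : nat, iter N (act ser_a) v = 0.
Definition Atil (E : zmodType) (act : ser -> E -> E) (v : E) : Prop :=
  forall f : ser, inB f -> Ators act (act f v).

End Atilde.

(* Main.v *)
Require Import Defs.
From HB Require Import structures.
From mathcomp Require Import all_boot all_order all_algebra.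
From mathcomp Require Import reals complex.
From Stdlib Require Import FunctionalExtensionality.
From mathcomp Require Import zify ring lra.
Set Implicit Arguments. Unset Strict Implicit. Unset Printing Implicit Defensive.
Import Order.TTheory GRing.Theory Num.Theory.
Local Open Scope ring_scope.

Module AlgM.
Section AlgS.
Variable E : zmodType.

Definition addf (g : E -> E) := forall x y, g (x + y) = g x + g y.

Lemma addf0 g : addf g -> g 0 = 0.
Proof. by move=> h; apply: (@addrI _ (g 0)); rewrite -h !addr0. Qed.

Lemma addfN g : addf g -> forall x, g (- x) = - g x.
Proof. move=> h x; apply/eqP; rewrite -subr_eq0 opprK -h addNr addf0 //. Qed.

Lemma addfB g : addf g -> forall x y, g (x - y) = g x - g y.
Proof. by move=> h x y; rewrite h addfN. Qed.

Lemma addfMn g : addf g -> forall x n, g (x *+ n) = g x *+ n.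
Proof. move=> h x; elim=> [|n IH]; first by rewrite !mulr0n addf0. by rewrite !mulrS h IH. Qed.

Lemma addf_iter g : addf g -> forall n, addf (iter n g).
Proof. move=> h; elim=> [|n IH] x y //=. by rewrite IH h. Qed.

Variables (A Bo : E -> E).
Hypotheses (hA : addf A) (hB : addf Bo).
Hypothesis hcomm : forall z, A (Bo z) = Bo (A z) + Bo (Bo z).

Definition L (k : nat) (y : E) := A y + Bo y *+ k.

Lemma addfL k : addf (L k).
Proof. by move=> x y; rewrite /L hA hB mulrnDl addrACA. Qed.

Lemma zid (a b c d e : E) n : a + b + c *+ n - (d + e *+ n) = (a - d) + b + (c - e) *+ n.
Proof. by rewrite mulrnBl opprD addrACA [a + b - d]addrAC. Qed.

Definition D (h : nat -> E) := fun k => h k.+1 - h k.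
Definition Dn n h := iter n D h.

Lemma DnS n h k : Dn n.+1 h k = Dn n h k.+1 - Dn n h k.
Proof. by []. Qed.

Lemma Dn_comm g : addf g -> forall n h k, g (Dn n h k) = Dn n (fun i => g (h i)) k.
Proof.
move=> hg; elim=> [|n IH] h k //.
by rewrite !DnS addfB // !IH.
Qed.

Lemma Dn_vanish n : forall h j, (forall i, (i <= n)%N -> h (j + i)%N = 0) -> Dn n h j = 0.
Proof.
elim: n => [|n IH] h j H.
  by have := H 0%N (leqnn 0); rewrite addn0.
rewrite /Dn iterSr; apply: IH => i hi.
by rewrite /D -addnS !H ?subrr // ?ltnS // leqW.
Qed.

Lemma Leib m h k : Dn m (fun i => L i (h i)) k = L k (Dn m h k) + Bo (Dn m.-1 h k.+1) *+ m.
Proof.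
elim: m k => [|m IH] k; first by rewrite mulr0n addr0.
rewrite DnS !IH.
have -> : L k.+1 (Dn m h k.+1) = L k (Dn m h k.+1) + Bo (Dn m h k.+1).
  by rewrite /L mulrS -addrA [Bo _ + _ *+ _]addrC.
case: m IH => [|m] IH.
  rewrite !mulr0n !addr0 /= addrAC -addfB; last exact: addfL.
  by [].
have e1 : Dn m h k.+2 - Dn m h k.+1 = Dn m.+1 h k.+1 by [].
have e2 : Dn m.+1 h k.+1 - Dn m.+1 h k = Dn m.+2 h k by [].
change (L k (Dn m.+1 h k.+1) + Bo (Dn m.+1 h k.+1) + Bo (Dn m h k.+2) *+ m.+1 -
  (L k (Dn m.+1 h k) + Bo (Dn m h k.+1) *+ m.+1) =
  L k (Dn m.+2 h k) + Bo (Dn m.+1 h k.+1) *+ m.+2).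
rewrite zid -e2 -(addfB (addfL k)) -addfB // e1 -addrA -mulrS.
by [].
Qed.

Variable x : E.
Definition f n k := iter n (L k) x.

Lemma Df n k : Dn n (f n) k = iter n Bo x *+ n`!.
Proof.
elim: n k => [|n IH] k; first by rewrite /= mulr1n.
change (Dn n.+1 (fun k => L k (f n k)) k = iter n.+1 Bo x *+ n.+1`!).
rewrite Leib [n.+1.-1]/= DnS !IH subrr.
rewrite addf0; last exact: addfL.
by rewrite add0r addfMn // -mulrnA factS mulnC.
Qed.

Lemma comm_k k y : A (iter k Bo y) = iter k Bo (L k y).
Proof.
elim: k y => [|k IH] y; first by rewrite /L /= mulr0n addr0.
rewrite /= hcomm IH /L mulrS.
have e : iter k Bo (Bo y) = Bo (iter k Bo y) by rewrite -iterSr.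
by rewrite [A y + (_ + _)]addrCA (addf_iter hB k (Bo y)) hB e [RHS]addrC.
Qed.
Lemma comm_kn k n y : iter k Bo (iter n (L k) y) = iter n A (iter k Bo y).
Proof. elim: n => [|n IH] //=. by rewrite -comm_k IH. Qed.

Variable N : nat.
Hypothesis hyp : forall k, iter N A (iter k Bo x) = 0.
Hypothesis tf : forall y : E, y *+ N`! = 0 -> y = 0.

Lemma main_alg : iter (2 * N) Bo x = 0.
Proof.
apply: tf.
have := Df N 0; move/(congr1 (iter N Bo)).
rewrite (Dn_comm (addf_iter hB N)) (addfMn (addf_iter hB N)) -iterD addnn mul2n.
move=> <-. apply: Dn_vanish => i hi; rewrite add0n /f.
by rewrite -{1}(subnK hi) iterD comm_kn hyp (addf0 (addf_iter hB _)).
Qed.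
End AlgS.
End AlgM.

Lemma sum_single (V : zmodType) n (F : nat -> V) k0 :
  (forall k, (k < n)%N -> k != k0 -> F k = 0) ->
  \sum_(k < n) F k = if (k0 < n)%N then F k0 else 0.
Proof.
elim: n => [|n IH] H; first by rewrite big_ord0.
rewrite big_ord_recr /= IH; last by move=> k hk; apply: H; exact: ltnW.
case: (ltngtP k0 n) => h.
- rewrite (H n) ?addr0 ?ltnSn //; last by rewrite neq_ltn h orbT.
  by rewrite (ltn_trans h (ltnSn n)).
- rewrite (H n) ?add0r ?ltnSn //; last by rewrite neq_ltn h.
  by rewrite ltnNge h.
- by subst; rewrite add0r ltnSn.
Qed.

Lemma sum_single_ord (V : zmodType) n (F : 'I_n -> V) k0 (h : (k0 < n)%N) :
  (forall k : 'I_n, val k != k0 -> F k = 0) -> \sum_k F k = F (Ordinal h).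
Proof.
move=> H; rewrite (bigD1 (Ordinal h)) //= big1 ?addr0 //.
Qed.

Section Ser.
Variable R : realType.
Local Notation C := (R[i]).

Lemma nocoef0 q r : nocoef R q r 0 = 1.
Proof. by rewrite /nocoef expr0 bin0 big_ord0 !mul1r. Qed.

Lemma mul_monoL p0 q0 (t : ser R) m n : ser_mul (ser_mono R p0 q0) t m n =
  if (p0 <= m)%N && (q0 <= n)%N then
   \sum_(k < (n - q0).+1) t (m - p0 + k)%N (n - q0 - k)%N * nocoef R q0 (m - p0 + k) k
  else 0.
Proof.
rewrite /ser_mul; case: (leqP p0 m) => hp /=; last first.
  apply: big1 => p _; apply: big1 => q _; apply: big1 => k _.
  rewrite /ser_mono; case: eqP => [e|]; last by rewrite !mul0r.
  by exfalso; move: (ltn_ord p); rewrite e ltnS leqNgt hp.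
rewrite (@sum_single_ord _ _ _ p0 (hp : (p0 < m.+1)%N)) /=; last first.
  move=> p hp'; apply: big1 => q _; apply: big1 => k _.
  by rewrite /ser_mono (negbTE hp') !mul0r.
case: (leqP q0 n) => hq /=; last first.
  apply: big1 => q _; apply: big1 => k _.
  rewrite /ser_mono eqxx /=; case: eqP => [e|]; last by rewrite !mul0r.
  by exfalso; move: (ltn_ord q); rewrite e ltnS leqNgt hq.
rewrite (@sum_single_ord _ _ _ q0 (hq : (q0 < n.+1)%N)) /=; last first.
  move=> q hq'; apply: big1 => k _.
  by rewrite /ser_mono eqxx (negbTE hq') !mul0r.
by apply: eq_bigr => k _; rewrite /ser_mono !eqxx mul1r.
Qed.
Lemma mulab m n : ser_mul (ser_a R) (ser_b R) m n = if (m == 1%N) && (n == 1%N) then 1 else 0.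
Proof.
rewrite /ser_a mul_monoL; case: m => [|m] //=.
rewrite subSS subn0 subn0 (@sum_single_ord _ _ _ 0 (ltn0Sn n)) /=; last first.
  move=> k hk; rewrite /ser_b /ser_mono addn_eq0 (negbTE hk) andbF /=.
  by rewrite mul0r.
by rewrite nocoef0 mulr1 /ser_b /ser_mono !addn0 subn0.
Qed.

Lemma mulbb m n : ser_mul (ser_b R) (ser_b R) m n = if (m == 0%N) && (n == 2%N) then 1 else 0.
Proof.
rewrite /ser_b mul_monoL; case: n => [|n] /=; first by rewrite andbF.
rewrite subSS subn0 subn0 (@sum_single_ord _ _ _ 0 (ltn0Sn n)) /=; last first.
  move=> k hk; rewrite /ser_mono addn_eq0 (negbTE hk) andbF /=.
  by rewrite mul0r.
by rewrite nocoef0 mulr1 /ser_mono !addn0 subn0.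
Qed.

Lemma mulba m n : ser_mul (ser_b R) (ser_a R) m n =
  (if (m == 1%N) && (n == 1%N) then 1 else 0) - (if (m == 0%N) && (n == 2%N) then 1 else 0).
Proof.
rewrite /ser_b mul_monoL; case: n => [|n] /=; first by rewrite !andbF subr0.
rewrite subSS subn0 subn0 (@sum_single_ord _ _ _ n (ltnSn n)) /=; last first.
  move=> k hk; rewrite /ser_a /ser_mono.
  have -> : ((n - k)%N == 0%N) = false.
    apply/negbTE; rewrite -ltnNge ltn_neqAle hk /= -ltnS; exact: ltn_ord.
  by rewrite andbF mul0r.
rewrite subnn /ser_a /ser_mono eqxx andbT.
case: m => [|[|m]]; case: n => [|[|n]] //=; rewrite ?addSn ?addnS ?add0n ?addn0 /=;
  rewrite ?mul0r ?mul1r ?subr0 ?sub0r ?nocoef0 //.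
by rewrite /nocoef big_ord1 binn expr1 !mulr1.
Qed.

Lemma comm_ser : ser_mul (ser_a R) (ser_b R) =
  ser_add (ser_mul (ser_b R) (ser_a R)) (ser_mul (ser_b R) (ser_b R)).
Proof.
apply: functional_extensionality => m; apply: functional_extensionality => n.
by rewrite /ser_add mulab mulba mulbb subrK.
Qed.
Lemma mul_gb (g : ser R) m n : (forall p q, (0 < p)%N -> g p q = 0) ->
  ser_mul g (ser_b R) m n = if (m == 0%N) && (n != 0%N) then g 0%N n.-1 else 0.
Proof.
move=> hg.
rewrite /ser_mul (@sum_single_ord _ _ _ 0 (ltn0Sn m)) /=; last first.
  move=> p hp; apply: big1 => q _; apply: big1 => k _.
  by rewrite hg ?lt0n // !mul0r.
rewrite (eq_bigr (fun q : 'I_n.+1 => g 0%N q * ser_b R m (n - q)%N)); last first.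
  move=> q _; rewrite (@sum_single_ord _ _ _ 0 (ltn0Sn _)) /=.
    by rewrite addn0 subn0 nocoef0 mulr1 subn0.
  move=> k hk; rewrite /ser_b /ser_mono addn_eq0 (negbTE hk) andbF.
  by rewrite mulr0 mul0r.
case: m => [|m] /=; last first.
  by apply: big1 => q _; rewrite /ser_b /ser_mono /= mulr0.
case: n => [|n] /=.
  by rewrite big_ord1 /ser_b /ser_mono /= mulr0.
rewrite (@sum_single_ord _ _ _ n (leqnSn n.+1)) /=.
  by rewrite subSnn /ser_b /ser_mono /= mulr1.
move=> q hq; rewrite /ser_b /ser_mono /=.
have -> : ((n.+1 - q)%N == 1%N) = false.
  apply/negbTE/eqP => e; move/eqP: hq; apply; have := ltn_ord q; lia.
by rewrite mulr0.
Qed.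

Lemma conv_bounded (s : ser R) (K : R) :
  (forall p q, `|s p q| <= (K%:C)%C) -> conv s.
Proof.
move=> hs; exists 2, (`|K| + 1); split; first by rewrite ltr1n.
have hK := normr_ge0 K; have hK2 := ler_norm K.
split; first by lra.
move=> p q; apply: le_trans (hs p q) _; rewrite lecR.
have h1 : 1 <= (2 : R) ^+ (p + q) by apply: exprn_ege1; rewrite ler1n.
have h2 : 1 <= (q`!)%:R :> R by rewrite ler1n fact_gt0.
have h3 : 1 <= (2 : R) ^+ (p + q) * (q`!)%:R by apply: mulr_ege1.
rewrite -mulrA; apply: le_trans (_ : `|K| + 1 <= _); first by lra.
by rewrite ler_peMr //; lra.
Qed.

Lemma inB_conv (g : ser R) : inB g -> conv g.
Proof.
case=> [[Rr [CR [hCR hb]]] hg].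
exists (`|Rr| + 2), CR; split; first by have := normr_ge0 Rr; lra.
split => // p q.
have hpos : 0 <= CR * (`|Rr| + 2) ^+ (p + q) * (q`!)%:R.
  have hr := normr_ge0 Rr.
  by apply: mulr_ge0 => //; apply: mulr_ge0; [exact: ltW | apply: exprn_ge0; lra].
case: p hpos => [|p] hpos; last by rewrite hg // normr0 ler0c.
apply: le_trans (hb q) _; rewrite lecR add0n.
rewrite ler_wpM2r // ler_pM2l //.
apply: le_trans (_ : `|Rr| ^+ q <= _).
  by rewrite -normrX real_ler_norm // num_real.
by rewrite lerXn2r ?nnegrE ?normr_ge0 //; have := normr_ge0 Rr; lra.
Qed.

Lemma inB_gb (g : ser R) : inB g -> inB (ser_mul g (ser_b R)).
Proof.
case=> [[Rr [CR [hCR hb]]] hg]; split; last first.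
  by move=> p q hp; rewrite mul_gb // eqn0Ngt hp.
exists (`|Rr| + 1), CR; split => // q; rewrite mul_gb //=.
have hpos : 0 <= CR * (`|Rr| + 1) ^+ q * (q`!)%:R.
  have hr := normr_ge0 Rr.
  by apply: mulr_ge0 => //; apply: mulr_ge0; [exact: ltW | apply: exprn_ge0; lra].
case: q hpos => [|q] hpos /=; first by rewrite normr0 ler0c.
apply: le_trans (hb q) _; rewrite lecR.
have hr := normr_ge0 Rr.
have e1 : Rr ^+ q <= `|Rr| ^+ q by rewrite -normrX real_ler_norm // num_real.
have e2 : `|Rr| ^+ q <= (`|Rr| + 1) ^+ q by rewrite lerXn2r ?nnegrE //; lra.
have e3 : (`|Rr| + 1) ^+ q <= (`|Rr| + 1) ^+ q.+1.
  by rewrite exprS ler_peMl ?exprn_ge0 //; lra.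
have e4 : (q`!)%:R <= (q.+1`!)%:R :> R.
  by rewrite ler_nat factS leq_pmull.
have e5 : 0 <= (q`!)%:R :> R by [].
have e6 : 0 <= `|Rr| ^+ q by rewrite exprn_ge0.
rewrite -!mulrA ler_pM2l //.
apply: le_trans (_ : (`|Rr| + 1) ^+ q.+1 * (q`!)%:R <= _).
  by rewrite ler_wpM2r //; apply: le_trans e3; apply: le_trans e2.
by rewrite ler_wpM2l // exprn_ge0 //; lra.
Qed.
End Ser.

Section Main.
Variable R : realType.
Local Notation C := (R[i]).

Lemma conv_mono m n : conv (ser_mono R m n).
Proof.
apply: (@conv_bounded _ _ 1) => p q; rewrite rmorph1 /ser_mono.
by case: (_ && _); rewrite ?normr1 ?normr0.
Qed.

Lemma conv_ba : conv (ser_mul (ser_b R) (ser_a R)).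
Proof.
apply: (@conv_bounded _ _ 1) => p q; rewrite rmorph1 mulba.
by case: (_ && _); case: (_ && _); rewrite ?subrr ?subr0 ?sub0r ?normrN ?normr1 ?normr0.
Qed.

Lemma conv_bb : conv (ser_mul (ser_b R) (ser_b R)).
Proof.
apply: (@conv_bounded _ _ 1) => p q; rewrite rmorph1 mulbb.
by case: (_ && _); rewrite ?normr1 ?normr0.
Qed.

Definition sc (c : C) : ser R := fun p q => if (p == 0%N) && (q == 0%N) then c else 0.

Lemma conv_sc (c : C) (K : R) : `|c| <= (K%:C)%C -> conv (sc c).
Proof.
move=> h; apply: (@conv_bounded _ _ (Num.max K 0)) => p q; rewrite /sc.
case: (_ && _); last by rewrite normr0 ler0c le_max lexx orbT.
apply: le_trans h _; rewrite lecR le_max lexx //.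
Qed.

Variable E : zmodType.
Variable act : ser R -> E -> E.
Hypothesis hmod : is_Amodule act.

Lemma act_addf s : conv s -> AlgM.addf (act s).
Proof. by case: hmod => _ hv _ _ hs x y; rewrite hv. Qed.

Lemma act_zero v : act (sc 0) v = 0.
Proof.
case: hmod => hadd _ _ _.
have c0 : conv (sc 0) by apply: (@conv_sc _ 0); rewrite normr0 rmorph0.
have e : ser_add (sc 0) (sc 0) = sc 0.
  apply: functional_extensionality => p; apply: functional_extensionality => q.
  by rewrite /ser_add /sc; case: (_ && _); rewrite addr0.
have := hadd _ _ v c0 c0; rewrite e => h.
by apply: (@addrI _ (act (sc 0) v)); rewrite -h addr0.
Qed.

Lemma act_scn (c : C) v m : `|c| <= 1 -> act (sc (m%:R * c)) v = act (sc c) v *+ m.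
Proof.
move=> hc; case: hmod => hadd _ _ _.
elim: m => [|m IH]; first by rewrite mul0r act_zero mulr0n.
have e : sc (m.+1%:R * c) = ser_add (sc (m%:R * c)) (sc c).
  apply: functional_extensionality => p; apply: functional_extensionality => q.
  by rewrite /ser_add /sc; case: (_ && _); rewrite ?addr0 // mulrSr mulrDl mul1r.
have cm : conv (sc (m%:R * c)).
  apply: (@conv_sc _ (m%:R)); rewrite rmorph_nat normrM normr_nat.
  by rewrite ler_piMr.
have c1 : conv (sc c) by apply: (@conv_sc _ 1); rewrite rmorph1.
by rewrite e hadd // IH mulrS addrC.
Qed.

Lemma tf n (y : E) : (0 < n)%N -> y *+ n = 0 -> y = 0.
Proof.
move=> hn hy; case: hmod => hadd hv hone _.
set c : C := (n%:R)^-1.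
have hc : `|c| <= 1.
  rewrite /c normfV normr_nat invf_le1 ?ler1n ?ltr0n //.
have cc : conv (sc c) by apply: (@conv_sc _ 1); rewrite rmorph1.
have e : sc (n%:R * c) = ser_one R.
  rewrite /c mulfV ?pnatr_eq0 -?lt0n //.
rewrite -(hone y) -e act_scn // -(AlgM.addfMn (act_addf cc)) hy.
exact: (AlgM.addf0 (act_addf cc)).
Qed.

Lemma comm_ab z : act (ser_a R) (act (ser_b R) z) =
  act (ser_b R) (act (ser_a R) z) + act (ser_b R) (act (ser_b R) z).
Proof.
case: hmod => hadd _ _ hmul.
have ca : conv (ser_a R) by exact: conv_mono.
have cb : conv (ser_b R) by exact: conv_mono.
have cba := conv_ba. have cbb := conv_bb.
rewrite -(hmul (ser_a R) (ser_b R)) // comm_ser hadd //.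
by rewrite !hmul.
Qed.

Lemma Atil_b v : Atil act v -> Atil act (act (ser_b R) v).
Proof.
case: hmod => _ _ _ hmul.
move=> hv g hg.
have cg := inB_conv hg. have cb : conv (ser_b R) by exact: conv_mono.
rewrite -hmul //.
exact: hv _ (inB_gb hg).
Qed.

Lemma Atil_bk v k : Atil act v -> Atil act (iter k (act (ser_b R)) v).
Proof. by move=> hv; elim: k => [|k IH] //=; apply: Atil_b. Qed.
End Main.

Theorem lemma2p5p3 (R : realType) (E : zmodType) (act : ser R -> E -> E)
  (hmod : is_Amodule act)
  (h1 : forall v : E, Btors act v -> Atil act v)
  (N : nat) (h2 : forall v : E, Atil act v -> iter N (act (ser_a R)) v = 0) :
  (forall v : E, Btors act v <-> Atil act v) /\
  (forall v : E, Atil act v -> iter (2 * N) (act (ser_b R)) v = 0).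
Proof.
have ca : conv (ser_a R) by exact: conv_mono.
have cb : conv (ser_b R) by exact: conv_mono.
have hA := act_addf hmod ca.
have hB := act_addf hmod cb.
have hc := comm_ab hmod.
have P2 : forall v : E, Atil act v -> iter (2 * N) (act (ser_b R)) v = 0.
  move=> v hv.
  have hyp : forall k, iter N (act (ser_a R)) (iter k (act (ser_b R)) v) = 0.
    by move=> k; apply: h2; apply: Atil_bk.
  have htf : forall y : E, y *+ N`! = 0 -> y = 0.
    by move=> y; apply: (tf hmod); rewrite fact_gt0.
  move=> {h1 h2 hv}.
  have H := @AlgM.main_alg E _ _ hA hB hc v N hyp htf.
  exact H.
split => // v; split; first exact: h1.
by move=> hv; exists (2 * N)%N; apply: P2.
Qed.
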